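(* Let $I\subset K[x,y]$ be a monomial ideal with $G(I)=\{u_0,\ldots,u_m\}$, $u_i=x^{a_i}y^{b_i}$, ordered so that $a_0>\cdots>a_m$ and $b_0<\cdots<b_m$, and write $I=x^{a_m}y^{b_0}J$ (so $J$ is the monomial ideal generated by $u_i/(x^{a_m}y^{b_0})$, $i=0,\dots,m$). Then $I$ is componentwise polymatroidal if and only if $J$ is a $yx$-tight ideal.
   Context: A monomial ideal generated in a single degree is polymatroidal if for all $u,v\in G(I)$ and all variables $z$ with $\deg_{z}(u)>\deg_{z}(v)$ there exists a variable $w$ with $\deg_{w}(u)<\deg_{w}(v)$ and $w(u/z)\in I$ ($\deg_z$ = exponent of $z$, $G(\cdot)$ = minimal monomial generating set). $I_{\langle j\rangle}$ is the ideal generated by all degree-$j$ monomials of $I$; $I$ is componentwise polymatroidal if every nonzero $I_{\langle j\rangle}$ is polymatroidal. Let $J\subset K[x,y]$ be a $(x,y)$-primary monomial ideal with $G(J)=\{x^{\alpha_i}y^{\beta_i}: i=0,\ldots,m\}$ ordered so that $\alpha_0>\cdots>\alpha_m=0$ and $0=\beta_0<\cdots<\beta_m$. $J$ is $x$-tight if $\alpha_{m-i}=i$ for all $i=0,\ldots,m$; $y$-tight if $\beta_i=i$ for all $i=0,\ldots,m$; $yx$-tight if there exists $0\le j\le m$ with $\beta_i=i$ for all $i=0,\ldots,j$ and $\alpha_{m-i}=i$ for all $i=0,\ldots,m-j$. *)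

(* Defs.v *)
(* Monomials of K[x,y] are encoded by their exponent vectors
   (deg_x, deg_y) : nat * nat; a monomial ideal is encoded by the set
   (predicate) of monomials it contains.  All notions below (minimal
   generators, I_<j>, polymatroidal, tightness) depend only on this set,
   not on the field K. *)
From mathcomp Require Import all_boot.
Set Implicit Arguments. Unset Strict Implicit. Unset Printing Implicit Defensive.

Definition mon := (nat * nat)%type.

(* variables: false = x, true = y *)
Definition var := bool.

Definition degv (z : var) (u : mon) : nat := if z then u.2 else u.1.

Definition tdeg (u : mon) : nat := u.1 + u.2.

Definition mdiv (u v : mon) : Prop := u.1 <= v.1 /\ u.2 <= v.2.

Definition monideal := mon -> Prop.

Definition gen_ideal (gs : seq mon) : monideal :=
  fun u => exists2 g, g \in gs & mdiv g u.

Definition mingens (I : monideal) : mon -> Prop :=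
  fun u => I u /\ forall v, I v -> mdiv v u -> v = u.

Definition comp (I : monideal) (j : nat) : monideal :=
  fun u => exists v, I v /\ tdeg v = j /\ mdiv v u.

Definition exch (w z : var) (u : mon) : mon :=
  let u' := if z then (u.1, u.2.-1) else (u.1.-1, u.2) in
  if w then (u'.1, u'.2.+1) else (u'.1.+1, u'.2).

Definition single_degree (I : monideal) : Prop :=
  exists d, forall u, mingens I u -> tdeg u = d.

Definition polymatroidal (I : monideal) : Prop :=
  single_degree I /\
  forall u v, mingens I u -> mingens I v ->
  forall z : var, degv z v < degv z u ->
  exists w : var, degv w u < degv w v /\ I (exch w z u).

Definition nonzero_ideal (I : monideal) : Prop := exists u, I u.

Definition componentwise_polymatroidal (I : monideal) : Prop :=
  forall j, nonzero_ideal (comp I j) -> polymatroidal (comp I j).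

(* Tightness of an (x,y)-primary ideal J with ordered minimal generators
   x^(alpha i) y^(beta i), i = 0..m, alpha decreasing to 0, beta increasing from 0. *)
Definition x_tight (m : nat) (alpha beta : nat -> nat) : Prop :=
  forall i, i <= m -> alpha (m - i) = i.

Definition y_tight (m : nat) (alpha beta : nat -> nat) : Prop :=
  forall i, i <= m -> beta i = i.

Definition yx_tight (m : nat) (alpha beta : nat -> nat) : Prop :=
  exists2 j, j <= m &
    (forall i, i <= j -> beta i = i) /\
    (forall i, i <= m - j -> alpha (m - i) = i).

(* Main.v *)
Require Import Defs.
From mathcomp Require Import all_boot.
From mathcomp Require Import zify.
Set Implicit Arguments.
Unset Strict Implicit.

Definition Iab (m : nat) (a b : nat -> nat) :=
  gen_ideal [seq (a i, b i) | i <- iota 0 m.+1].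

Lemma memI m a b u : Iab m a b u <-> exists c, c <= m /\ a c <= u.1 /\ b c <= u.2.
Proof.
split.
- move=> [g /mapP [c]]; rewrite mem_iota => /andP[_ hc] -> [h1 h2].
  exists c; split; [lia| split; done].
- move=> [c [hc [h1 h2]]]; exists (a c, b c); last by split.
  apply/mapP; exists c => //; rewrite mem_iota; apply/andP; split; lia.
Qed.

Lemma amono m a (ha : forall i, i < m -> a i.+1 < a i) g k :
  g <= k -> k <= m -> a k + (k - g) <= a g.
Proof.
elim: k => [|k IH] hg hk; first by move: hg; rewrite leqn0 => /eqP ->; rewrite subnn addn0.
case: (leqP g k) => hgk.
- have := IH hgk ltac:(lia). have := ha k ltac:(lia). lia.
- have -> : g = k.+1 by lia. lia.
Qed.

Lemma bmono m b (hb : forall i, i < m -> b i < b i.+1) g k :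
  g <= k -> k <= m -> b g + (k - g) <= b k.
Proof.
elim: k => [|k IH] hg hk; first by move: hg; rewrite leqn0 => /eqP ->; rewrite subnn addn0.
case: (leqP g k) => hgk.
- have := IH hgk ltac:(lia). have := hb k ltac:(lia). lia.
- have -> : g = k.+1 by lia. lia.
Qed.

Lemma mdiv_eq u v : mdiv u v -> tdeg u = tdeg v -> u = v.
Proof. case: u => u1 u2; case: v => v1 v2; rewrite /mdiv /tdeg /= => -[h1 h2] h.
congr pair; lia. Qed.

Lemma mdiv_refl u : mdiv u u.
Proof. by split. Qed.

Lemma comp_deg (I : monideal) (D : nat) w : Defs.comp I D w -> tdeg w = D -> I w.
Proof. move=> [v [Iv [dv mv]]] dw. by rewrite -(mdiv_eq mv) ?dv. Qed.

Lemma mingens_comp (I : monideal) (D : nat) u : I u -> tdeg u = D -> mingens (Defs.comp I D) u.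
Proof.
move=> Iu du; split; first by exists u; split => //; split => //; apply: mdiv_refl.
move=> v [v' [Iv' [dv' mv']]] mv.
have e : v' = u.
  apply: mdiv_eq; first by case: mv' mv => ? ? [? ?]; split; lia.
  by rewrite dv' du.
subst v'. apply: mdiv_eq => //. case: mv mv' => ? ? [? ?]. rewrite /tdeg. lia.
Qed.

Lemma mingens_comp_inv (I : monideal) (D : nat) u : mingens (Defs.comp I D) u -> I u /\ tdeg u = D.
Proof.
move=> [[v [Iv [dv mv]]] hmin].
have e := hmin v (ex_intro _ v (conj Iv (conj dv (mdiv_refl v)))) mv.
by subst v.
Qed.

Lemma gapR m a b (ha : forall i, i < m -> a i.+1 < a i)
  (hb : forall i, i < m -> b i < b i.+1) j (hj : j <= m)
  (Hb : forall i, i <= j -> b i = b 0 + i)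
  (Ha : forall k, j <= k -> k <= m -> a k = a m + (m - k))
  p q t s g h : g <= m -> a g <= p + t -> b g + t <= q ->
  h <= m -> a h + s <= p -> b h <= q + s ->
  exists c, c <= m /\ a c <= p /\ b c <= q.
Proof.
move=> hg1 hg2 hg3 hh1 hh2 hh3.
have ex : exists n, (n <= m) && (a n <= p) by exists h; apply/andP; split; lia.
case: (ex_minnP ex) => c /andP[hc hcp] hmin.
case: (leqP (b c) q) => hbc; first by exists c.
exfalso.
have gc : g < c.
  rewrite ltnNge; apply/negP => cg. have := bmono hb cg hg1. lia.
destruct c as [|c']; first by lia.
have hc1 : p < a c'.
  rewrite ltnNge; apply/negP => H.
  have := hmin c' ltac:(apply/andP; split; lia). lia.
case: (leqP c'.+1 j) => cj.
- have := Hb g ltac:(lia). have := Hb c'.+1 cj.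
  have := amono ha (g:=g) (k:=c') ltac:(lia) ltac:(lia). lia.
- have := Ha c' ltac:(lia) ltac:(lia). have := Ha c'.+1 ltac:(lia) hc.
  have hch : c'.+1 <= h := hmin h ltac:(apply/andP; split; lia).
  have := Ha h ltac:(lia) hh1.
  have := bmono hb hch hh1. lia.
Qed.

Lemma suff_dir m a b (ha : forall i, i < m -> a i.+1 < a i)
  (hb : forall i, i < m -> b i < b i.+1) j (hj : j <= m)
  (Hb : forall i, i <= j -> b i = b 0 + i)
  (Ha : forall k, j <= k -> k <= m -> a k = a m + (m - k)) :
  componentwise_polymatroidal (Iab m a b).
Proof.
move=> D _; split.
  exists D => u /mingens_comp_inv [_ ->]. done.
move=> u v /mingens_comp_inv [Iu du] /mingens_comp_inv [Iv dv] z hz.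
move: du dv; rewrite /tdeg => du dv.
case: z hz => /= hz.
- exists false; split => /=; first by lia.
  rewrite /exch /=. exists (u.1.+1, u.2.-1); split; last by split; [rewrite /tdeg /=; lia | split => /=; lia].
  apply/memI. case/memI: Iu => h [hh1 [hh2 hh3]]. case/memI: Iv => g [hg1 [hg2 hg3]].
  apply: (gapR ha hb hj Hb Ha (t := v.1 - u.1.+1) (s := 1) hg1 _ _ hh1) => /=; lia.
- exists true; split => /=; first by lia.
  rewrite /exch /=. exists (u.1.-1, u.2.+1); split; last by split; [rewrite /tdeg /=; lia | split => /=; lia].
  apply/memI. case/memI: Iu => g [hg1 [hg2 hg3]]. case/memI: Iv => h [hh1 [hh2 hh3]].
  apply: (gapR ha hb hj Hb Ha (t := 1) (s := u.1.-1 - v.1) hg1 _ _ hh1) => /=; lia.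
Qed.

Lemma argmax (f : nat -> nat) i n :
  exists k, i <= k <= i + n /\ forall k', i <= k' <= i + n -> f k' <= f k.
Proof.
elim: n => [|n [k [hk Hk]]].
- exists i; split; first lia. move=> k' hk'. have -> : k' = i by lia. done.
- case: (leqP (f k) (f (i + n.+1))) => h.
  + exists (i + n.+1); split; first lia. move=> k' hk'.
    case: (leqP k' (i + n)) => h2; first by have := Hk k' ltac:(lia); lia.
    have -> : k' = i + n.+1 by lia. done.
  + exists k; split; first lia. move=> k' hk'.
    case: (leqP k' (i + n)) => h2; first by apply: Hk; lia.
    have -> : k' = i + n.+1 by lia. lia.
Qed.

Lemma nec_gap m a b (ha : forall i, i < m -> a i.+1 < a i)
  (hb : forall i, i < m -> b i < b i.+1)
  (CP : componentwise_polymatroidal (Iab m a b)) i i' :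
  i <= i' -> i' < m -> b i + 2 <= b i.+1 -> a i'.+1 + 2 <= a i' -> False.
Proof.
move=> hii' hi'm hbi hai'.
have [k [hk Hk]] := argmax (fun k => a k + b k.+1) i (i' - i).
have fi := Hk i ltac:(lia). have fi' := Hk i' ltac:(lia).
move: fi fi' => /= fi fi'.
set D := a k + b k.+1 - 2.
set A := a i.
have aki := amono ha (g := i) (k := k) ltac:(lia) ltac:(lia).
have aki' := amono ha (g := k) (k := i') ltac:(lia) ltac:(lia).
have bki := bmono hb (g := i.+1) (k := k.+1) ltac:(lia) ltac:(lia).
have Iv : Iab m a b (a i'.+1, D - a i'.+1).
  apply/memI; exists i'.+1; split; first lia. rewrite /=; lia.
have claim : forall t, t <= A - a i'.+1 -> Iab m a b (A - t, D - A + t).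
  elim => [|t IH] ht.
  - apply/memI; exists i; split; first lia. rewrite /= /A /D; lia.
  - have Iu := IH ltac:(lia).
    have du : tdeg (A - t, D - A + t) = D by rewrite /tdeg /= /A /D; lia.
    have dv : tdeg (a i'.+1, D - a i'.+1) = D by rewrite /tdeg /= /A /D; lia.
    have [_ Hex] := CP D (ex_intro _ _ (proj1 (mingens_comp Iu du))).
    have := Hex _ _ (mingens_comp Iu du) (mingens_comp Iv dv) false.
    move=> /(_ ltac:(rewrite /=; lia)) [[|] [/= hw hI]]; last by lia.
    move: hI; rewrite /exch /= => hI.
    have dw : tdeg ((A - t).-1, (D - A + t).+1) = D by rewrite /tdeg /=; lia.
    have := comp_deg hI dw.
    by have -> : ((A - t).-1, (D - A + t).+1) = (A - t.+1, D - A + t.+1) by congr pair; lia.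
have := claim (A - a k + 1) ltac:(lia).
case/memI => c [hc [/= h1 h2]].
case: (leqP c k) => ck.
- have := amono ha ck ltac:(lia). lia.
- have := bmono hb (g := k.+1) (k := c) ck hc. lia.
Qed.

Unset Implicit Arguments.
Set Strict Implicit.

Theorem corollary2p7 (m : nat) (a b : nat -> nat)
  (ha : forall i, i < m -> a i.+1 < a i)
  (hb : forall i, i < m -> b i < b i.+1) :
  componentwise_polymatroidal (gen_ideal [seq (a i, b i) | i <- iota 0 m.+1])
  <->
  yx_tight m (fun i => a i - a m) (fun i => b i - b 0).
Proof.
split.
- move=> CP.
  have ex : exists n, (n == m) || ((n < m) && (b n + 2 <= b n.+1)) by exists m; rewrite eqxx.
  case: (ex_minnP ex) => j Pj hmin.
  have hj : j <= m by case/orP: Pj => [/eqP -> //| /andP [? _]]; lia.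
  have Hb : forall i, i <= j -> b i = b 0 + i.
    elim => [|i IH] hi; first by rewrite addn0.
    have := IH ltac:(lia). have := hb i ltac:(lia).
    case: (leqP (b i + 2) (b i.+1)) => h; last by lia.
    have := hmin i ltac:(apply/orP; right; apply/andP; split; lia). lia.
  have Ha1 : forall k, j <= k -> k < m -> a k = a k.+1 + 1.
    move=> k hjk hkm. have := ha k hkm.
    case: (leqP (a k.+1 + 2) (a k)) => h; last by lia.
    exfalso.
    have hbj : b j + 2 <= b j.+1.
      case/orP: Pj => [/eqP ej | /andP [_ //]]. lia.
    exact: (nec_gap ha hb CP hjk hkm hbj h).
  have Ha : forall n k, k + n = m -> j <= k -> a k = a m + n.
    elim => [|n IH] k hkn hjk; first by rewrite addn0 -hkn addn0.
    rewrite (Ha1 k hjk ltac:(lia)) (IH k.+1 ltac:(lia) ltac:(lia)). lia.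
  exists j => //; split.
  + move=> i hi. rewrite (Hb i hi). lia.
  + move=> i hi. rewrite (Ha i (m - i) ltac:(lia) ltac:(lia)). lia.
- move=> [j hj [Hb' Ha']].
  apply: (suff_dir ha hb hj).
  + move=> i hi. have := Hb' i hi. have := bmono hb (g := 0) (k := i) ltac:(lia) ltac:(lia). lia.
  + move=> k hjk hkm. have := Ha' (m - k) ltac:(lia).
    have -> : m - (m - k) = k by lia.
    have := amono ha hkm (leqnn m). lia.
Qed.
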